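(* Let $G$ be a finite abstract simplicial complex with connection graph $G'$. For $x\in G$ let $B(x)$ be the closed unit ball of $x$ in $G'$ and $d(x)$ the vertex degree of $x$ in $G'$. Then $d(x)=\sum_{y\in B(x)}\chi(S^+(y))$.
   Context: A finite abstract simplicial complex $G$ is a finite set of non-empty finite sets closed under taking non-empty subsets. The connection graph $G'$ has vertex set $G$, with distinct simplices adjacent iff they intersect; $B(x)$ consists of $x$ and all its neighbors in $G'$. The graph $G_1$ has vertex set $G$ with $x\neq y$ adjacent iff $x\subset y$ or $y\subset x$. For $y\in G$, $S^+(y)=\{z\in G: y\subsetneq z\}$, and $\chi(S^+(y))$ is the Euler characteristic $\sum_K(-1)^{|K|-1}$ over non-empty cliques $K$ of the subgraph of $G_1$ induced on $S^+(y)$ (so $\chi(\emptyset)=0$). *)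

(* Defs.v *)
From mathcomp Require Import all_boot all_order all_algebra.
Set Implicit Arguments. Unset Strict Implicit. Unset Printing Implicit Defensive.
Import GRing.Theory Num.Theory.

Section Complex.
Variable V : finType.

Definition is_complex (G : {set {set V}}) : bool :=
  [forall x in G, (x != set0) &&
     [forall y : {set V}, ((y != set0) && (y \subset x)) ==> (y \in G)]].

Definition conn_adj (x y : {set V}) : bool := (x != y) && (x :&: y != set0).

Definition ball (G : {set {set V}}) (x : {set V}) : {set {set V}} :=
  [set y in G | (y == x) || conn_adj x y].

Definition degree (G : {set {set V}}) (x : {set V}) : nat :=
  #|[set y in G | conn_adj x y]|.

Definition Splus (G : {set {set V}}) (y : {set V}) : {set {set V}} :=
  [set z in G | y \proper z].

Definition is_clique_G1 (K : {set {set V}}) : bool :=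
  [forall a in K, forall b in K, (a != b) ==> ((a \subset b) || (b \subset a))].

(* Euler characteristic of the subgraph of G_1 induced on A:
   sum over non-empty cliques K of (-1)^(|K|-1). *)
Definition chi (A : {set {set V}}) : int :=
  \sum_(K in powerset A | (K != set0) && is_clique_G1 K)
     ((-1) ^+ (#|K|.-1))%R.

End Complex.

(* Main.v *)
Require Import Defs.
From mathcomp Require Import all_boot all_order all_algebra.
From mathcomp Require Import zify.
Set Implicit Arguments. Unset Strict Implicit. Unset Printing Implicit Defensive.
Import GRing.Theory Num.Theory.
Local Open Scope ring_scope.

Section S.
Variable V : finType.

Lemma alt0 (s : {set V}) a : a \in s ->
  \sum_(v : {set V} | v \subset s) (-1)^+#|v| = 0 :> int.
Proof.
move=> as_.
pose t (v : {set V}) := if a \in v then v :\ a else a |: v.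
have tK : involutive t.
  move=> v; rewrite /t; case: (boolP (a \in v)) => av.
    by rewrite setD11 setD1K.
  by rewrite setU11 setU1K.
have E := reindex_inj (inv_inj tK) (P := fun v : {set V} => v \subset s)
   (F := fun v : {set V} => (-1)^+#|v| : int).
have E2 : \sum_(v | t v \subset s) (-1)^+#|t v| =
          - \sum_(v : {set V} | v \subset s) (-1)^+#|v| :> int.
  rewrite -sumrN; apply: eq_big => v; rewrite /t; case: (boolP (a \in v)) => av.
  - by rewrite -[in RHS](setD1K av) subUset sub1set as_.
  - by rewrite subUset sub1set as_.
  - by move=> _; rewrite [in RHS](cardsD1 a v) av add1n exprS mulN1r opprK.
  - by move=> _; rewrite cardsU1 av add1n exprS mulN1r.
move: E2; rewrite -E => /eqP; rewrite -subr_eq0 opprK -mulr2n mulrn_eq0 /= => /eqP.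
done.
Qed.

Lemma ie (s : {set V}) :
  \sum_(v : {set V} | (v \subset s) && (v != set0)) (-1)^+(#|v|.-1) = (s != set0)%:Z :> int.
Proof.
case: (set_0Vmem s) => [->|[a as_]].
  rewrite big_pred0 ?eqxx // => v; by rewrite subset0 andbN.
have := alt0 as_; rewrite (bigD1 set0) ?sub0set //= cards0 expr0.
have -> : s != set0 by apply/set0Pn; exists a.
move=> h.
rewrite (eq_bigr (fun v : {set V} => - (-1)^+#|v|)); last first.
  move=> v /andP[_ v0]; rewrite -[in RHS](prednK (n := #|v|)) ?card_gt0 //.
  by rewrite exprS mulN1r opprK.
rewrite sumrN; set S := \sum_(i | _) _ in h *.
have -> : S = -1 by apply/eqP; rewrite -subr_eq0 opprK addrC h.
by rewrite opprK.
Qed.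

Lemma cliqueP (K : {set {set V}}) :
  reflect (forall a b, a \in K -> b \in K -> a != b -> (a \subset b) || (b \subset a))
          (is_clique_G1 K).
Proof.
apply: (iffP forall_inP) => [H a b aK bK ab | H a aK].
  by move/forall_inP: (H a aK) => /(_ b bK) /implyP; apply.
by apply/forall_inP => b bK; apply/implyP; apply: H.
Qed.

Variable G : {set {set V}}.

Lemma chi_rec y : chi (Splus G y) = \sum_(m in Splus G y) (1 - chi (Splus G m)).
Proof.
set S := Splus G y.
pose P (K : {set {set V}}) := (K \in powerset S) && ((K != set0) && is_clique_G1 K).
pose Q (K : {set {set V}}) m := [&& m \in S, m \in K & K :\ m \subset Splus G m].
have uniq : forall K, P K -> exists m0, forall m, Q K m = (m == m0).
  move=> K /and3P[]; rewrite powersetE => KS /set0Pn[k0 k0K] /cliqueP cl.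
  case: (arg_minnP (fun k : {set V} => #|k|) k0K) => m0 m0K m0min.
  have above : forall k, k \in K -> k != m0 -> k \in Splus G m0.
    move=> k kK ne; have := subsetP KS k kK; rewrite !inE => /andP[kG _].
    rewrite kG /= properEneq eq_sym ne /=.
    have ne' : m0 != k by rewrite eq_sym.
    case/orP: (cl m0 k m0K kK ne') => // km0.
    have : k \proper m0 by rewrite properEneq ne.
    by move/proper_card; rewrite ltnNge m0min.
  have Qm0 : forall m, m \in K -> K :\ m \subset Splus G m -> m = m0.
    move=> m mK /subsetP sub; apply/eqP; apply/negPn/negP => ne.
    have : m0 \in Splus G m by apply: sub; rewrite !inE eq_sym ne.
    have := above m mK ne.
    rewrite !inE => /andP[_ p1] /andP[_ p2].
    by have := proper_trans p1 p2; rewrite properxx.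
  exists m0 => m; apply/idP/eqP => [/and3P[_ mK sub] | ->]; first exact: Qm0.
  rewrite /Q (subsetP KS _ m0K) /=; apply/andP; split=> //; apply/subsetP => k; rewrite 2!inE => /andP[ne kK].
  by apply: above.
rewrite /chi.
transitivity (\sum_(K | P K) \sum_(m | Q K m) ((-1)^+(#|K|.-1) : int)).
  by apply: eq_bigr => K PK; case: (uniq K PK) => m0 h; rewrite (big_pred1 m0 h).
rewrite (exchange_big_dep (fun m => m \in S)) /=; last by move=> K m _ /and3P[].
apply: eq_bigr => m mS.
have R : \sum_(K' | (K' \in powerset (Splus G m)) && is_clique_G1 K') ((-1)^+#|K'| : int)
    = 1 - \sum_(K in powerset (Splus G m) | (K != set0) && is_clique_G1 K) (-1)^+(#|K|.-1).
  rewrite (bigD1 set0) /=; last first.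
    by rewrite powersetE sub0set; apply/cliqueP => a b; rewrite inE.
  rewrite cards0 expr0; congr (_ + _); rewrite -sumrN.
  apply: eq_big => [K|K /andP[_ K0]]; first by rewrite andbAC -andbA.
  by rewrite -[in LHS](prednK (n := #|K|)) ?card_gt0 // exprS mulN1r.
rewrite -R.
rewrite (reindex_onto (fun K' => m |: K') (fun K => K :\ m)) /=; last first.
  by move=> K /andP[_ /and3P[_ mK _]]; rewrite setD1K.
apply: eq_big => K'.
  rewrite /P /Q !powersetE.
  apply/idP/idP.
    case/andP => /andP[/andP[_ /andP[_ cl]] /and3P[_ _ sub]] /eqP E.
    rewrite E in sub; rewrite sub /=; apply/cliqueP => a b aK bK.
    by apply: (cliqueP _ cl); apply: setU1r.
  case/andP => sub cl.
  have mK' : m \notin K' by apply/negP => /(subsetP sub); rewrite inE properxx andbF.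
  rewrite setU1K // eqxx andbT setU11 sub andbT mS /=.
  rewrite andbT; apply/and3P; split.
  - rewrite subUset sub1set mS /=; apply/subsetP => k /(subsetP sub); rewrite !inE.
    move=> /andP[kG mk]; move: mS; rewrite inE => /andP[_ ym].
    by rewrite kG (proper_trans ym mk).
  - by apply/set0Pn; exists m; exact: setU11.
  - apply/cliqueP => a b; rewrite !inE => /predU1P[->|aK] /predU1P[->|bK].
    + by rewrite eqxx.
    + by move: (subsetP sub b bK); rewrite inE => /andP[_ /proper_sub ->].
    + by move: (subsetP sub a aK); rewrite inE => /andP[_ /proper_sub ->]; rewrite orbT.
    + exact: (cliqueP _ cl).
move=> /andP[_ /eqP E].
have mK' : m \notin K' by rewrite -E setD11.
by rewrite cardsU1 mK' add1n.
Qed.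

Lemma sum_up y : y \in G ->
  \sum_(m | (m \in G) && (y \subset m)) (1 - chi (Splus G m)) = 1.
Proof.
move=> yG; rewrite (bigD1 y) /= ?yG ?subxx //.
rewrite (eq_bigl (fun m => m \in Splus G y)) -?chi_rec; first by rewrite subrK.
move=> m; rewrite inE properEneq [m == y]eq_sym.
by case: (m \in G); case: (y \subset m); case: (y == m).
Qed.
End S.

Theorem mainTheorem13 (V : finType) (G : {set {set V}}) (x : {set V}) :
  is_complex G -> x \in G ->
  ((degree G x)%:Z = \sum_(y in ball G x) chi (Splus G y))%R.
Proof.
move=> hG xG.
have cplx : forall v w, w \in G -> v != set0 -> v \subset w -> v \in G.
  move=> v w wG v0 vw; move/forall_inP: hG => /(_ w wG) /andP[_ /forallP /(_ v)].
  by rewrite v0 vw.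
have x0 : x != set0 by move/forall_inP: hG => /(_ x xG) /andP[].
have ballE : ball G x = [set y in G | x :&: y != set0].
  apply/setP => y; rewrite !inE /conn_adj; case: (y \in G) => //=.
  case: (y =P x) => [->|/eqP ne] /=; first by rewrite setIid x0.
  by rewrite eq_sym ne.
have card : #|ball G x| = (degree G x).+1.
  rewrite /degree -add1n.
  have -> : ball G x = x |: [set y in G | conn_adj x y].
    by apply/setP => y; rewrite !inE; case: (y =P x) => [->|_] /=; rewrite ?xG.
  by rewrite cardsU1 inE /conn_adj eqxx /= andbF.
have sumg : \sum_(y in ball G x) (1 - chi (Splus G y)) = 1.
  rewrite ballE.
  rewrite (eq_bigl (fun y : {set V} => (y \in G) && (x :&: y != set0))); last by move=> y; rewrite inE.
  transitivity (\sum_(y in G) \sum_(v : {set V} | (v \subset x :&: y) && (v != set0))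
                  (1 - chi (Splus G y)) * (-1)^+(#|v|.-1)).
    rewrite big_mkcondr /=; apply: eq_bigr => y _; rewrite -mulr_sumr ie.
    by case: (x :&: y != set0); rewrite ?mulr1 ?mulr0.
  rewrite (exchange_big_dep (fun v : {set V} => (v \subset x) && (v != set0))) /=; last first.
    by move=> y v _ /andP[]; rewrite subsetI => /andP[-> _] ->.
  transitivity (\sum_(v : {set V} | (v \subset x) && (v != set0)) ((-1)^+(#|v|.-1) : int));
    last by rewrite ie x0.
  apply: eq_bigr => v /andP[vx v0].
  rewrite -mulr_suml.
  rewrite (eq_bigl (fun y : {set V} => (y \in G) && (v \subset y))); last first.
    by move=> y; rewrite subsetI vx v0 /= andbT.
  by rewrite sum_up ?mul1r // (cplx v x).
rewrite (eq_bigr (fun y => 1 - (1 - chi (Splus G y)))); last by move=> y _; lia.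
rewrite sumrB sumg sumr_const card.
lia.
Qed.
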